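(* Let $G$ be a finite simple graph of order $n$ and size $m$ whose adjacency matrix $A(G)$ is non-singular. Let $\mu_1\ge\mu_2$ be the two largest values among $|\lambda_1|,\dots,|\lambda_n|$ (counted with multiplicity), where $\lambda_1,\dots,\lambda_n$ are the eigenvalues of $A(G)$. Then \[\mathcal{E}(G)\geq \mu_1+(n-1)\left(\sqrt{\mu_2^2+2\mu_2\sqrt[n-1]{\frac{|\det A(G)|}{\mu_1}}+\frac{2m-\mu_1^2}{n-1}}-\mu_2\right).\]
   Context: For a finite simple graph $G$, $A(G)$ is its adjacency matrix with eigenvalues $\lambda_1\ge\cdots\ge\lambda_n$, and the energy is $\mathcal{E}(G)=\sum_{i=1}^n|\lambda_i|$. Note $\mu_1=\lambda_1$ and $\mu_2=\max(\lambda_2,-\lambda_n)$. $G$ is non-singular if $A(G)$ is non-singular. *)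

(* Defs.v *)
From HB Require Import structures.
From mathcomp Require Import all_boot all_order all_algebra.
From mathcomp Require Import reals exp.
Set Implicit Arguments. Unset Strict Implicit. Unset Printing Implicit Defensive.
Import Order.TTheory GRing.Theory Num.Theory.
Local Open Scope ring_scope.

Definition simple_graph (n : nat) (e : rel 'I_n) : Prop :=
  (forall i j, e i j = e j i) /\ (forall i, ~~ e i i).

Definition adjmx (R : nzRingType) (n : nat) (e : rel 'I_n) : 'M[R]_n :=
  \matrix_(i, j) (e i j)%:R.

Definition nedges (n : nat) (e : rel 'I_n) : nat :=
  #|[set p : 'I_n * 'I_n | e p.1 p.2 && (p.1 < p.2)%N]|.

(* lam lists the eigenvalues of A with multiplicity: the characteristic
   polynomial of A splits as prod_i (X - lam_i). *)
Definition eigenvalues_of (R : comNzRingType) (n : nat) (A : 'M[R]_n)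
  (lam : 'I_n -> R) : Prop :=
  char_poly A = \prod_(i < n) ('X - (lam i)%:P).

Definition energy (R : numDomainType) (n : nat) (lam : 'I_n -> R) : R :=
  \sum_(i < n) `|lam i|.

Definition abs_sorted (R : realDomainType) (n : nat) (lam : 'I_n -> R) : seq R :=
  sort (fun x y : R => y <= x) [seq `|lam i| | i <- enum 'I_n].

Definition mu1 (R : realDomainType) (n : nat) (lam : 'I_n -> R) : R :=
  (abs_sorted lam)`_0.
Definition mu2 (R : realDomainType) (n : nat) (lam : 'I_n -> R) : R :=
  (abs_sorted lam)`_1.

(* Main.v *)
Require Import Defs.
From HB Require Import structures.
From mathcomp Require Import all_boot all_order all_algebra.
From mathcomp Require Import reals exp.
From mathcomp Require Import boolp classical_sets functions topology normedtype derive.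
From mathcomp Require Import ring lra.
Import Order.TTheory GRing.Theory Num.Theory.
Import numFieldNormedType.Exports.
Local Open Scope classical_set_scope.
Local Open Scope ring_scope.

Section S1.
Variable R : realType.

Lemma ln_quad (x c M : R) : 0 < x -> x <= M -> 0 < c -> c <= M ->
  ln x <= ln c + (x - c) / c - (x - c) ^+ 2 / (2 * c * M).
Proof.
move=> x0 xM c0 cM.
have M0 : 0 < M by apply: lt_le_trans cM.
pose p : {poly R} := (- c^-1) *: 'X + (2 * c * M)^-1 *: ('X - c%:P) ^+ 2.
pose h : R -> R := (@ln R) + horner p.
have hE y : h y = ln y - y / c + (y - c) ^+ 2 / (2 * c * M).
  rewrite /h /p addrfctE /= !hornerE /=. ring.
pose dh := fun y : R => y^-1 + p^`().[y].
have dhE y : 0 < y -> dh y = y^-1 - c^-1 + (y - c) / (c * M).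
  move=> y0; rewrite /dh /p !poly.derivE !hornerE /=. field. by rewrite !gt_eqF.
have hd (y : R) : 0 < y -> is_derive y 1 h (dh y).
  move=> y0; exact: (is_deriveD (is_derive1_ln y0) (is_derive_poly p y)).
have hc a b : 0 < a -> {within `[a, b], continuous h}.
  move=> a0; apply: derivable_within_continuous => y; rewrite in_itv /= => /andP[ay _].
  have := hd y (lt_le_trans a0 ay); by case.
have dhF z : 0 < z -> dh z = (c - z) * (M - z) / (z * c * M).
  move=> z0; rewrite dhE //; field; by rewrite !gt_eqF.
have itvo (a b y : R) : y \in `]a, b[ -> a < y /\ y < b.
  by rewrite in_itv /= => /andP[].
have key : h x <= h c.
  case: (ltgtP x c) => [xc|cx|->]; last by [].
  - have [z zI E] := MVT xc (fun y yI => hd y (lt_trans x0 (itvo _ _ _ yI).1)) (hc x c x0).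
    have z0 : 0 < z := lt_trans x0 (itvo _ _ _ zI).1.
    have zc : z < c := (itvo _ _ _ zI).2.
    have : 0 <= dh z * (c - x).
      rewrite dhF // mulr_ge0 // ?subr_ge0 ?(ltW xc) //.
      rewrite divr_ge0 // ?mulr_ge0 ?subr_ge0 ?(ltW zc) ?(ltW z0) ?(ltW c0) ?(ltW M0) //.
      exact: (le_trans (ltW zc) cM).
    by rewrite -E subr_ge0.
  - have [z zI E] := MVT cx (fun y yI => hd y (lt_trans c0 (itvo _ _ _ yI).1)) (hc c x c0).
    have z0 : 0 < z := lt_trans c0 (itvo _ _ _ zI).1.
    have cz : c < z := (itvo _ _ _ zI).1.
    have zx : z < x := (itvo _ _ _ zI).2.
    have : dh z * (x - c) <= 0.
      rewrite dhF // pmulr_lle0 ?subr_gt0 //.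
      rewrite -mulrA; apply: mulr_le0_ge0; first by rewrite subr_le0 ltW.
      rewrite divr_ge0 // ?mulr_ge0 ?subr_ge0 ?(ltW z0) ?(ltW c0) ?(ltW M0) //.
      exact: (le_trans (ltW zx) xM).
    by rewrite -E subr_le0.
move: key; rewrite !hE subrr expr0n /= mul0r addr0 divff ?gt_eqF //.
have -> : (x - c) / c = x / c - 1 by field; rewrite gt_eqF.
lra.
Qed.

Lemma sum_quad (t : seq R) a b d :
  \sum_(x <- t) (a + b * x + d * x ^+ 2) =
  (size t)%:R * a + b * \sum_(x <- t) x + d * \sum_(x <- t) x ^+ 2.
Proof.
elim: t => [|y t IH]; first by rewrite !big_nil /= mul0r !mulr0 !addr0.
rewrite !big_cons IH /= mulrS; ring.
Qed.

Lemma ln_prod (t : seq R) : (forall x, x \in t -> 0 < x) ->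
  ln (\prod_(x <- t) x) = \sum_(x <- t) ln x.
Proof.
elim: t => [|y t IH] H; first by rewrite !big_nil ln1.
have Ht : forall x, x \in t -> 0 < x by move=> x xt; apply: H; rewrite inE xt orbT.
have y0 : 0 < y by apply: H; rewrite inE eqxx.
have P0 : 0 < \prod_(x <- t) x by rewrite big_seq; apply: prodr_gt0 => x xt; exact: Ht.
by rewrite !big_cons lnM ?posrE // IH.
Qed.

Lemma core (t : seq R) (M : R) : (0 < size t)%N -> 0 < M ->
  (forall x, x \in t -> 0 < x <= M) ->
  (size t)%:R * (Num.sqrt (M ^+ 2 + 2 * M * powR (\prod_(x <- t) x) (size t)%:R^-1
     + (\sum_(x <- t) x ^+ 2) / (size t)%:R) - M) <= \sum_(x <- t) x.
Proof.
move=> st M0 H.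
have S0 : 0 < \sum_(x <- t) x.
  case: t st H => // y t _ H; rewrite big_cons.
  apply: ltr_pwDl; first by have /andP[] := H y (mem_head _ _).
  rewrite big_seq; apply: sumr_ge0 => x xt.
  by have /andP[/ltW] := H x (mem_behead (s := y :: t) xt).
set k : R := (size t)%:R.
set S := \sum_(x <- t) x.
set Q := \sum_(x <- t) x ^+ 2.
have k0 : 0 < k by rewrite /k ltr0n.
have Hp x : x \in t -> 0 < x by move=> /H /andP[].
have HM x : x \in t -> x <= M by move=> /H /andP[].
have QMS : Q <= M * S.
  rewrite /Q /S mulr_sumr big_seq_cond [X in _ <= X]big_seq_cond.
  apply: ler_sum => x /andP[xt _]; rewrite expr2 ler_pM2r; [exact: HM | exact: Hp].
have SkM : S <= k * M.
  apply: (@le_trans _ _ (\sum_(x <- t) (M + 0 * x + 0 * x ^+ 2))).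
    rewrite /S big_seq_cond [X in _ <= X]big_seq_cond; apply: ler_sum => x /andP[xt _].
    by rewrite !mul0r !addr0; exact: HM.
  by rewrite sum_quad !mul0r !addr0.
have CS : S ^+ 2 <= k * Q.
  have := sum_quad t ((S / k) ^+ 2) (- 2 * (S / k)) 1.
  have -> : \sum_(x <- t) ((S / k) ^+ 2 + - 2 * (S / k) * x + 1 * x ^+ 2) =
            \sum_(x <- t) (x - S / k) ^+ 2.
    by apply: eq_bigr => x _; ring.
  rewrite -/S -/Q -/k => E.
  have : 0 <= \sum_(x <- t) (x - S / k) ^+ 2 by apply: sumr_ge0 => x _; apply: sqr_ge0.
  rewrite E.
  have -> : k * (S / k) ^+ 2 + - 2 * (S / k) * S + 1 * Q = (k * Q - S ^+ 2) / k.
    by field; rewrite gt_eqF.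
  by rewrite pmulr_lge0 ?invr_gt0 // subr_ge0.
set N := 2 * k * M * S - k * Q + S ^+ 2.
have N0 : 0 < N.
  have kQ : k * Q <= k * (M * S) by rewrite ler_pM2l.
  have kMS : 0 < k * (M * S) by rewrite !mulr_gt0.
  have S2 : 0 < S ^+ 2 by rewrite exprn_gt0.
  rewrite /N; lra.
set c := N / (2 * k ^+ 2 * M).
have c0 : 0 < c by rewrite /c divr_gt0 // !mulr_gt0 // exprn_gt0.
have cM : c <= M.
  rewrite /c ler_pdivrMr ?mulr_gt0 ?exprn_gt0 //.
  rewrite /N; nra.
set P := \prod_(x <- t) x.
have P0 : 0 < P by rewrite /P big_seq; apply: prodr_gt0 => x xt; exact: Hp.
have sumln : \sum_(x <- t) ln x <= k * ln c.
  have L : \sum_(x <- t) ln x <= \sum_(x <- t)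
     ((ln c - 1 - c / (2 * M)) + (c^-1 + M^-1) * x + (- (2 * c * M)^-1) * x ^+ 2).
    rewrite big_seq_cond [X in _ <= X]big_seq_cond.
    apply: ler_sum => x /andP[xt _].
    have := @ln_quad x c M (Hp x xt) (HM x xt) c0 cM.
    have -> : ln c + (x - c) / c - (x - c) ^+ 2 / (2 * c * M) =
      (ln c - 1 - c / (2 * M)) + (c^-1 + M^-1) * x + (- (2 * c * M)^-1) * x ^+ 2.
      by field; rewrite !gt_eqF.
    by [].
  apply: (le_trans L); rewrite sum_quad -/k -/S -/Q.
  have -> : k * (ln c - 1 - c / (2 * M)) + (c^-1 + M^-1) * S + - (2 * c * M)^-1 * Q
     = k * ln c - (S - k * c) ^+ 2 / (2 * k * c * M).
    rewrite /c /N. field. by rewrite (gt_eqF M0) (gt_eqF k0) (gt_eqF N0).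
  have : 0 <= (S - k * c) ^+ 2 / (2 * k * c * M).
    have pos : 0 < 2 * k * c * M.
      apply: mulr_gt0 => //; apply: mulr_gt0 => //; apply: mulr_gt0 => //.
    exact: divr_ge0 (sqr_ge0 _) (ltW pos).
  lra.
have GC : powR P k^-1 <= c.
  rewrite /powR gt_eqF // -[X in _ <= X]lnK ?posrE // ler_expR ln_prod //.
  by rewrite mulrC ler_pdivrMr // mulrC.
set G := powR P k^-1.
have B0 : 0 <= k^-1 * S + M by rewrite addr_ge0 ?mulr_ge0 ?invr_ge0 ?ltW.
have Hs : Num.sqrt (M ^+ 2 + 2 * M * G + Q / k) <= k^-1 * S + M.
  rewrite -[X in _ <= X]ger0_norm // -sqrtr_sqr ler_sqrt ?sqr_ge0 //.
  have -> : (k^-1 * S + M) ^+ 2 = M ^+ 2 + 2 * M * c + Q / k.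
    rewrite /c /N; field; by rewrite (gt_eqF M0) (gt_eqF k0).
  by rewrite lerD2r lerD2l ler_pM2l // mulr_gt0.
have : Num.sqrt (M ^+ 2 + 2 * M * G + Q / k) - M <= k^-1 * S by lra.
rewrite -(ler_pM2l k0) mulrA mulfV ?gt_eqF // mul1r.
by [].
Qed.
End S1.

Section S2.
Variable R : fieldType.

Lemma charpoly_sq n (A : 'M[R]_n) :
  char_poly (A *m A) \Po 'X^2 =
  char_poly A * ((-1) ^+ n * (char_poly A \Po (- 'X))).
Proof.
set Ap := map_mx (@polyC R) A.
have mapc (q : {poly R}) (B : 'M[R]_n) :
    map_mx (comp_poly q) (char_poly_mx B) = q%:M - map_mx (@polyC R) B.
  apply/matrixP => i j; rewrite !mxE comp_polyB comp_polyC.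
  case: (i == j); by rewrite /= ?mulr1n ?mulr0n ?comp_polyX ?comp_poly0.
rewrite /char_poly -det_map_mx /= mapc.
rewrite -det_map_mx /= mapc.
have -> : (- 'X)%:M - Ap = - ('X%:M + Ap).
  by rewrite opprD raddfN.
rewrite -[- ('X%:M + Ap)]scaleN1r detZ [(-1) ^+ n * (_ * _)]mulrA -exprMn mulrNN mulr1 expr1n mul1r.
rewrite -det_mulmx; congr (\det _).
rewrite mulmxBl !mulmxDr scalar_mxC -scalar_mxM map_mxM -/Ap.
rewrite opprD addrA; congr (_ - _).
by rewrite [Ap *m _]scalar_mxC addrK expr2.
Qed.


Lemma charpoly_sq_eig n (A : 'M[R]_n) (lam : 'I_n -> R) :
  char_poly A = \prod_(i < n) ('X - (lam i)%:P) ->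
  char_poly (A *m A) = \prod_(i < n) ('X - (lam i ^+ 2)%:P).
Proof.
move=> hA.
have H := @charpoly_sq n A.
rewrite hA rmorph_prod /= in H.
have E1 : \prod_(i < n) (('X - (lam i)%:P) \Po (- 'X)) =
          (-1) ^+ n * \prod_(i < n) ('X + (lam i)%:P).
  rewrite -[X in (-1) ^+ X](card_ord n) -prodrN; apply: eq_bigr => i _.
  by rewrite comp_polyB comp_polyX comp_polyC opprD.
rewrite E1 [(-1) ^+ n * (_ * _)]mulrA -exprMn mulrNN mulr1 expr1n mul1r -big_split /= in H.
have E2 : \prod_(i < n) (('X - (lam i)%:P) * ('X + (lam i)%:P)) =
          (\prod_(i < n) ('X - (lam i ^+ 2)%:P)) \Po 'X^2.
  rewrite rmorph_prod; apply: eq_bigr => i _ /=.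
  rewrite comp_polyB comp_polyX comp_polyC rmorphXn /=.
  ring.
rewrite E2 in H.
apply/eqP; rewrite -subr_eq0 -(comp_poly_eq0 _ (q := 'X^2)); last by rewrite size_polyXn.
by rewrite comp_polyB H subrr.
Qed.

Lemma trace_sq_eig n (A : 'M[R]_n) (lam : 'I_n -> R) : (0 < n)%N ->
  char_poly A = \prod_(i < n) ('X - (lam i)%:P) ->
  \tr (A *m A) = \sum_(i < n) lam i ^+ 2.
Proof.
move=> n0 hA.
have H := @charpoly_sq_eig n A lam hA.
apply: oppr_inj; rewrite -char_poly_trace // H.
have E : \prod_(i < n) ('X - (lam i ^+ 2)%:P) =
   \prod_(x <- [seq lam i ^+ 2 | i <- enum 'I_n]) ('X - x%:P).
  by rewrite big_map big_enum.
have sz : size [seq lam i ^+ 2 | i <- enum 'I_n] = n by rewrite size_map size_enum_ord.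
rewrite E -[X in _`_X.-1]sz coefPn_prod_XsubC ?sz -?lt0n //.
by rewrite big_map big_enum.
Qed.

End S2.

Section S3.
Variable R : realType.

Lemma det_eig n (A : 'M[R]_n) (lam : 'I_n -> R) :
  char_poly A = \prod_(i < n) ('X - (lam i)%:P) -> \det A = \prod_(i < n) lam i.
Proof.
move=> hA.
have h := char_poly_det A.
have E : \prod_(i < n) ('X - (lam i)%:P) =
   \prod_(x <- [seq lam i | i <- enum 'I_n]) ('X - x%:P).
  by rewrite big_map big_enum.
have sz : size [seq lam i | i <- enum 'I_n] = n by rewrite size_map size_enum_ord.
rewrite hA E coef0_prod_XsubC sz big_map big_enum /= in h.
have := congr1 (fun x => (-1) ^+ n * x) h.
by rewrite !mulrA -!exprMn mulrNN mulr1 expr1n !mul1r => <-.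
Qed.

Lemma count_pairs n (e : rel 'I_n) : simple_graph e ->
  (\sum_(i < n) \sum_(j < n) (e i j : nat) = 2 * nedges e)%N.
Proof.
case=> sym irr.
rewrite pair_bigA /=.
have E : forall p : 'I_n * 'I_n, (e p.1 p.2 : nat) =
   ((e p.1 p.2 && (p.1 < p.2)%N) : nat) + ((e p.2 p.1 && (p.2 < p.1)%N) : nat).
  move=> [i j] /=; rewrite (sym j i).
  case: ssrnat.ltngtP => h; rewrite ?andbT ?andbF; try by case: (e i j).
  by rewrite (val_inj h) (negbTE (irr j)).
under bigop.eq_bigr => p _ do rewrite E.
rewrite big_split /=.
have -> : (\sum_(p : 'I_n * 'I_n) ((e p.2 p.1 && (p.2 < p.1)%N) : nat) =
          \sum_(p : 'I_n * 'I_n) ((e p.1 p.2 && (p.1 < p.2)%N) : nat))%N.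
  rewrite (reindex_inj (h := fun p : 'I_n * 'I_n => (p.2, p.1))) //=.
  by move=> [a b] [c d] /= [-> ->].
rewrite addnn -mul2n; congr (_ * _)%N.
rewrite /nedges -sum1_card [RHS]big_mkcond /=.
by apply: eq_bigr => p _; rewrite inE; case: (_ && _).
Qed.

Lemma tr_adj_sq n (e : rel 'I_n) : simple_graph e ->
  \tr (adjmx R e *m adjmx R e) = 2 * (nedges e)%:R.
Proof.
move=> sg; have [sym irr] := sg.
rewrite /mxtrace.
have -> : \sum_i (adjmx R e *m adjmx R e) i i = \sum_(i < n) \sum_(j < n) ((e i j : nat))%:R.
  apply: eq_bigr => i _; rewrite mxE; apply: eq_bigr => j _.
  by rewrite !mxE (sym j i); case: (e i j); rewrite ?mulr1 ?mulr0.
have -> : \sum_(i < n) \sum_(j < n) ((e i j : nat))%:R =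
          (\sum_(i < n) \sum_(j < n) (e i j : nat))%:R :> R.
  rewrite natr_sum; apply: eq_bigr => i _; by rewrite natr_sum.
by rewrite count_pairs // natrM.
Qed.

End S3.


Theorem theorem3p2 (R : realType) (n : nat) (e : rel 'I_n) (lam : 'I_n -> R) :
  (0 < n)%N ->
  simple_graph e ->
  \det (adjmx R e) != 0 ->
  eigenvalues_of (adjmx R e) lam ->
  let m := nedges e in
  let m1 := mu1 lam in
  let m2 := mu2 lam in
  energy lam >=
    m1 + (n.-1)%:R *
      (Num.sqrt (m2 ^+ 2
                 + 2 * m2 * powR (`|\det (adjmx R e)| / m1) (n.-1)%:R^-1
                 + (2 * m%:R - m1 ^+ 2) / (n.-1)%:R)
       - m2).
Proof.
move=> n0 sg detn0 hE; cbv zeta.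
have hdet : \det (adjmx R e) = \prod_(i < n) lam i := @det_eig R _ _ _ hE.
have lam_nz : forall i, lam i != 0.
  move=> i; apply/negP => /eqP h; move: detn0.
  by rewrite hdet (bigD1 i) //= h mul0r eqxx.
have ps : perm_eq (abs_sorted lam) [seq `|lam i| | i <- enum 'I_n].
  by rewrite /abs_sorted perm_sort perm_refl.
have ss : sorted (fun x y : R => y <= x) (abs_sorted lam).
  by apply: sort_sorted => x y; exact: le_total.
have sz : size (abs_sorted lam) = n by rewrite (perm_size ps) size_map size_enum_ord.
have pos : forall x, x \in abs_sorted lam -> 0 < x.
  move=> x; rewrite (perm_mem ps) => /mapP [i _ ->]; by rewrite normr_gt0.
have Esum : energy lam = \sum_(x <- abs_sorted lam) x.
  by rewrite (perm_big _ ps) big_map big_enum.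
have Eprod : \prod_(x <- abs_sorted lam) x = `|\det (adjmx R e)|.
  by rewrite (perm_big _ ps) big_map big_enum hdet normr_prod.
have Esq : \sum_(x <- abs_sorted lam) x ^+ 2 = 2 * (nedges e)%:R.
  rewrite (perm_big _ ps) big_map big_enum /=.
  under eq_bigr => i _ do rewrite real_normK ?num_real //.
  by rewrite -(@trace_sq_eig _ n _ lam n0 hE) (@tr_adj_sq R n e sg).
rewrite /mu1 /mu2 Esum.
move: ss sz pos Eprod Esq.
case: (abs_sorted lam) => [|x0 t] /= ss sz pos Eprod Esq; first by move: n0; rewrite -[X in (0 < X)%N]sz.
rewrite big_cons.
have x00 : 0 < x0 by apply: pos; rewrite inE eqxx.
case: t ss sz pos Eprod Esq => [|x1 t] ss sz pos Eprod Esq.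
  have -> : n.-1 = 0%N by rewrite -sz.
  by rewrite big_nil mulr0n mul0r !addr0.
have Hn : n.-1 = size (x1 :: t) by rewrite -sz.
rewrite lerD2l Hn /=.
have Hin : forall x, x \in x1 :: t -> 0 < x <= x1.
  move=> x xt; apply/andP; split.
    by apply: pos; rewrite inE xt orbT.
  move: xt; rewrite inE => /orP [/eqP -> //|xt].
  have := order_path_min (x := x1) (leT := fun x y : R => y <= x) _ (path_sorted ss).
  move=> /(_ _) /allP H; apply: H => //.
  by move=> a b c ba cb; exact: le_trans cb ba.
have Pt : \prod_(x <- x1 :: t) x = `|\det (adjmx R e)| / x0.
  by rewrite -Eprod [in RHS]big_cons mulrAC divff ?gt_eqF // mul1r.
have Qt : \sum_(x <- x1 :: t) x ^+ 2 = 2 * (nedges e)%:R - x0 ^+ 2.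
  by rewrite -Esq [in RHS]big_cons addrAC subrr add0r.
rewrite -Pt -Qt.
have x1in : x1 \in [:: x0, x1 & t] by rewrite !inE eqxx orbT.
exact: (@core R (x1 :: t) x1 isT (pos x1 x1in) Hin).
Qed.
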